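(* Assume the Continuum Hypothesis. Then there exists a maximal almost disjoint family $\mathcal A$ of infinite subsets of $\omega$, each member of which is not an IP-set, such that for every AP-set $B\subseteq\omega$ and every finite-to-one function $f:B\to\omega$ there exist an AP-set $C\subseteq B$ and $A\in\mathcal A$ with $f[C]\subseteq A$.
   Context: $\omega=\{0,1,2,\dots\}$. A set $A\subseteq\omega$ is an AP-set if it contains arithmetic progressions of every finite length. For $B\subseteq\omega$, $FS(B)$ denotes the set of all sums $\sum_{n\in F}n$ over nonempty finite subsets $F\subseteq B$. A set $A\subseteq\omega$ is an IP-set if there is an infinite $B\subseteq\omega$ with $FS(B)\subseteq A$. A family $\mathcal A$ of infinite subsets of $\omega$ is almost disjoint if any two distinct members have finite intersection, and maximal almost disjoint if moreover every infinite $D\subseteq\omega$ has infinite intersection with some member of $\mathcal A$. *)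

(* Defs.v *)
From mathcomp Require Import all_boot.
From mathcomp Require Import boolp classical_sets cardinality.
Set Implicit Arguments. Unset Strict Implicit. Unset Printing Implicit Defensive.
Local Open Scope classical_set_scope.

(* Continuum Hypothesis: 2^aleph0 = aleph1, i.e. P(omega) carries a well-order
   of order type omega_1 (every proper initial segment is countable). *)
Definition CH : Prop :=
  exists lt : set nat -> set nat -> Prop,
    well_founded lt /\
    (forall x y z, lt x y -> lt y z -> lt x z) /\
    (forall x y, lt x y \/ x = y \/ lt y x) /\
    (forall y, countable [set x | lt x y]).

Definition AP_set (A : set nat) : Prop :=
  forall k : nat, exists a d : nat, (0 < d)%N /\
    forall i : nat, (i < k)%N -> A (a + i * d)%N.

Definition FS_sub (B A : set nat) : Prop :=
  forall s : seq nat, uniq s -> s != [::] -> (forall x, x \in s -> B x) ->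
    A (sumn s).

Definition IP_set (A : set nat) : Prop :=
  exists B : set nat, infinite_set B /\ FS_sub B A.

Definition almost_disjoint (F : set (set nat)) : Prop :=
  (forall A, F A -> infinite_set A) /\
  (forall A A', F A -> F A' -> A <> A' -> finite_set (A `&` A')).

Definition MAD (F : set (set nat)) : Prop :=
  almost_disjoint F /\
  (forall D : set nat, infinite_set D -> exists2 A, F A & infinite_set (D `&` A)).

Definition finite_to_one_on (B : set nat) (f : nat -> nat) : Prop :=
  forall n : nat, finite_set (B `&` f @^-1` [set n]).

(* Main.v *)
Require Import Defs.
From mathcomp Require Import all_boot.
From mathcomp Require Import boolp classical_sets cardinality.
From mathcomp Require Import zify.
From mathcomp Require finmap.
Set Implicit Arguments. Unset Strict Implicit. Unset Printing Implicit Defensive.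
Local Open Scope classical_set_scope.

Definition monoAP (T : eqType) (col : nat -> T) (k N a d : nat) : Prop :=
  0 < d /\ forall i, i < k -> a + i * d < N /\ col (a + i * d) = col a.

Definition vdw (k : nat) (T : finType) (N : nat) :=
  forall col : nat -> T, exists a d, monoAP col k N a d.

Definition svdw (k : nat) (T : finType) (N : nat) :=
  forall col : nat -> T, exists a d, monoAP col k N a d /\ a + k * d < N.

Lemma vdw_svdw k (T : finType) N : vdw k.+1 T N -> svdw k.+1 T (2 * N + 2).
Proof.
move=> H col; case: k H => [|k] H.
  exists 0, 1; split; last by lia.
  split=> // i; rewrite ltnS leqn0 => /eqP ->; split=> //; lia.
have [a [d [d0 Hm]]] := H col; exists a, d; split.
  split=> // i ik; have [h1 h2] := Hm i ik; split=> //; lia.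
have [h1 _] := Hm k.+1 (ltnSn _).
have : d <= k.+1 * d by rewrite leq_pmull.
lia.
Qed.

Definition Foc (K : nat) (T : finType) (s N : nat) :=
  forall col : nat -> T, (exists a d, monoAP col K.+1 N a d) \/
  exists p (a d : nat -> nat), p < N /\
    (forall j, j < s -> monoAP col K N (a j) (d j) /\ a j + K * d j = p) /\
    (forall j j', j < s -> j' < s -> col (a j) = col (a j') -> j = j').

Lemma Foc0 K T : Foc K T 0 1.
Proof. by move=> col; right; exists 0, (fun _ => 0), (fun _ => 0). Qed.

Lemma blk_lt M L t x : t < L -> x < M -> M * t + x < M * L.
Proof. move=> h1 h2; have : M * t.+1 <= M * L by rewrite leq_mul2l h1 orbT. lia. Qed.

Lemma FocS k (T : finType) s M :
  (forall T' : finType, exists L, svdw k.+1 T' L) -> Foc k.+1 T s M ->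
  exists N, Foc k.+1 T s.+1 N.
Proof.
move=> IH HF.
have [L HL] := IH {ffun 'I_M -> T}.
exists (M * L) => col.
pose beta (t : nat) : {ffun 'I_M -> T} := [ffun u : 'I_M => col (M * t + u)].
have [t0 [e [[e0 Hb] Hfoc]]] := HL beta.
have t0L : t0 < L by have [h _] := Hb 0 isT; move: h; rewrite mul0n addn0.
have blk : forall i, i < k.+1 -> forall x, x < M ->
    col (M * (t0 + i * e) + x) = col (M * t0 + x).
  move=> i ik x xM; have [_ h] := Hb i ik.
  have := congr1 (fun g : {ffun 'I_M -> T} => g (Ordinal xM)) h.
  by rewrite /beta !ffunE.
pose col' := fun x => col (M * t0 + x).
case: (HF col') => [[a [d [d0 Hm]]]|[p [a [d [pM [Hj Hinj]]]]]].
  left; exists (M * t0 + a), d; split=> // i ik.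
  have [h1 h2] := Hm i ik; rewrite -addnA; split; first exact: blk_lt.
  by move: h2; rewrite /col' => ->.
case: (pselect (exists2 j, j < s & col' (a j) = col' p)) => [[j js ej]|nj].
  left; exists (M * t0 + a j), (d j); have [[d0 Hm] fj] := Hj j js.
  split=> // i; rewrite ltnS leq_eqVlt => /orP[/eqP ->|ik].
    rewrite -addnA fj; split; first exact: blk_lt.
    by move: ej; rewrite /col' => ->.
  have [h1 h2] := Hm i ik; rewrite -addnA; split; first exact: blk_lt.
  by move: h2; rewrite /col' => ->.
have M0 : 0 < M by lia.
right.
exists (M * (t0 + k.+1 * e) + p).
exists (fun j => if j < s then M * t0 + a j else M * t0 + p).
exists (fun j => if j < s then d j + M * e else M * e).
split; first exact: blk_lt.
split.
  move=> j; rewrite ltnS leq_eqVlt => /orP[/eqP ->|js].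
    rewrite ltnn; split; last by lia.
    split; first by rewrite muln_gt0 M0.
    move=> i ik; have [h1 _] := Hb i ik.
    have -> : M * t0 + p + i * (M * e) = M * (t0 + i * e) + p by lia.
    by split; [exact: blk_lt | rewrite blk // mulnC mul0n addn0].
  rewrite js; have [[d0 Hm] fj] := Hj j js.
  split; last by lia.
  split; first by lia.
  move=> i ik; have [h1 _] := Hb i ik; have [h3 h4] := Hm i ik.
  have -> : M * t0 + a j + i * (d j + M * e) = M * (t0 + i * e) + (a j + i * d j) by lia.
  split; first exact: blk_lt.
  by rewrite blk //; move: h4; rewrite /col' => ->.
move=> j j'; rewrite ltnS leq_eqVlt => /orP[/eqP ->|js];
  rewrite ltnS leq_eqVlt => /orP[/eqP ->|j's] //; rewrite ?ltnn ?js ?j's.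
- by move=> h; exfalso; apply: nj; exists j' => //; rewrite /col' h.
- by move=> h; exfalso; apply: nj; exists j => //; rewrite /col' h.
- exact: Hinj.
Qed.

Lemma Foc_vdw k (T : finType) N : Foc k.+1 T #|T| N -> vdw k.+2 T N.
Proof.
move=> HF col; case: (HF col) => [//|[p [a [d [pN [Hj Hinj]]]]]].
pose phi := fun j : 'I_#|T| => col (a j).
have phiI : injective phi.
  by move=> j j' h; apply: val_inj; apply: Hinj => //; [exact: ltn_ord|exact: ltn_ord].
have := inj_card_onto phiI (eq_leq (esym (card_ord _))) (col p).
move=> /codomP[j ej].
have [[d0 Hm] fj] := Hj j (ltn_ord j).
exists (a j), (d j); split=> // i; rewrite ltnS leq_eqVlt => /orP[/eqP ->|ik].
  by rewrite fj ej.
exact: Hm.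
Qed.

Lemma vdw_all k (T : finType) : exists N, vdw k.+1 T N.
Proof.
elim: k T => [|k IH] T.
  exists 1 => col; exists 0, 1; split=> // i; rewrite ltnS leqn0 => /eqP ->; by [].
have IH' : forall T' : finType, exists L, svdw k.+1 T' L.
  by move=> T'; have [N HN] := IH T'; exists (2 * N + 2); exact: vdw_svdw.
have : forall s, exists N, Foc k.+1 T s N.
  elim=> [|s [M HM]]; first by exists 1; exact: Foc0.
  exact: FocS HM.
move=> /(_ #|T|) [N HN]; exists N; exact: Foc_vdw.
Qed.

Definition APk (X : set nat) k := exists a d, 0 < d /\ forall i, i < k -> X (a + i * d).

Lemma PR (B : set nat) (Q : nat -> set nat) n :
  AP_set B -> (forall x, B x -> exists2 i, i < n & Q i x) ->
  exists2 i, i < n & AP_set (B `&` Q i).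
Proof.
move=> HB Hc; apply: contrapT => Hn.
have Hk : forall i, exists k, i < n -> ~ APk (B `&` Q i) k.
  move=> i; case: (pselect (i < n)) => [iN|iN]; last by exists 0.
  have : ~ AP_set (B `&` Q i) by move=> h; apply: Hn; exists i.
  by move=> /existsNP [k hk]; exists k.
have [kk Hkk] := choice Hk.
case: n Hc Hn Hk Hkk => [|n] Hc Hn Hk Hkk.
  have [a [d [_ h]]] := HB 1; have := h 0 isT.
  by move=> /Hc [].
pose K := \max_(i < n.+1) kk i.
have [N HN] := vdw_all K 'I_n.+1.
have [a [d [d0 Hab]]] := HB N.
have Hh : forall x, exists i, B x -> i < n.+1 /\ Q i x.
  move=> x; case: (pselect (B x)) => [Bx|Bx]; last by exists 0.
  by have [i ??] := Hc x Bx; exists i.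
have [h Hh'] := choice Hh.
pose col := fun t => (inord (h (a + t * d)) : 'I_n.+1).
have [a' [d' [d'0 Hm]]] := HN col.
pose c := h (a + a' * d).
have B0 : B (a + a' * d) by have [h1 _] := Hm 0 isT; move: h1; rewrite mul0n addn0 => /Hab.
have cn : c < n.+1 by have [] := Hh' _ B0.
have kkK : kk c <= K by exact: (leq_bigmax (F := fun i : 'I_n.+1 => kk i) (Ordinal cn)).
apply: (Hkk c cn); exists (a + a' * d), (d' * d); split; first by rewrite muln_gt0 d'0.
move=> i ik.
have ik' : i < K.+1 by lia.
have [h1 h2] := Hm i ik'.
have Bt := Hab _ h1.
have -> : a + a' * d + i * (d' * d) = a + (a' + i * d') * d by lia.
split=> //.
have [hn hq] := Hh' _ Bt.
suff <- : h (a + (a' + i * d') * d) = c by [].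
move: h2 => /(congr1 (@nat_of_ord _)); rewrite /col (inordK hn) (inordK cn).
by [].
Qed.

Lemma fin_bound (A : set nat) : finite_set A -> exists N, forall x, A x -> x < N.
Proof.
move=> /finite_fsetP [X ->]; exists (\max_(x <- finmap.enum_fset X) x).+1 => x /= xX.
by rewrite ltnS; exact: (leq_bigmax_seq (F := id) x xX isT).
Qed.

Lemma bound_fin (A : set nat) N : (forall x, A x -> x < N) -> finite_set A.
Proof. by move=> h; apply: (sub_finite_set _ (finite_II N)) => x /h. Qed.

Lemma inf_unb (A : set nat) : infinite_set A -> forall N, exists x, A x /\ N <= x.
Proof.
move=> hA N; apply: contrapT => hn; apply: hA; apply: (@bound_fin _ N) => x Ax.
rewrite ltnNge; apply/negP => le; apply: hn; by exists x.
Qed.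

Lemma unb_inf (A : set nat) : (forall N, exists x, A x /\ N <= x) -> infinite_set A.
Proof.
move=> h /fin_bound [N HN]; have [x [Ax le]] := h N; have := HN x Ax; lia.
Qed.

Definition Thin (A : set nat) :=
  forall b, 0 < b -> exists M, forall c, A c -> A (c + b) -> c < M.

Lemma thin_notIP A : Thin A -> ~ IP_set A.
Proof.
move=> hT [E [Einf HFS]].
have [b [Eb b1]] := inf_unb Einf 1.
have [M HM] := hT b b1.
have [c [Ec cM]] := inf_unb Einf (maxn M b.+1).
have cb : c != b by apply/eqP => e; move: cM; rewrite e; lia.
have Ac : A c.
  have := HFS [:: c] isT isT; rewrite /= addn0; apply.
  by move=> x; rewrite inE => /eqP ->.
have Acb : A (c + b).
  have := HFS [:: c; b]; rewrite /= addn0; apply => //.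
    by rewrite inE cb.
  by move=> x; rewrite !inE => /orP[] /eqP ->.
have := HM c Ac Acb; lia.
Qed.

Fixpoint xseq (pk : nat -> nat) k :=
  match k with 0 => pk 0 | k'.+1 => pk (xseq pk k' + k' + 2) end.

Lemma E1 (G : set (set nat)) D : infinite_set D ->
  (forall A', G A' -> finite_set (D `&` A')) ->
  exists A, [/\ infinite_set A, ~ IP_set A,
     (forall A', G A' -> finite_set (A `&` A')) & infinite_set (D `&` A)].
Proof.
move=> Dinf HG.
have [pk Hpk] := choice (inf_unb Dinf).
pose x := xseq pk.
have xD : forall k, D (x k) by case=> [|k]; rewrite /x /=; exact: (Hpk _).1.
have xS : forall k, x k + k + 2 <= x k.+1 by move=> k; rewrite /x /=; exact: (Hpk _).2.
have xm : forall j i, j <= i -> x j <= x i.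
  move=> j i /subnK <-; elim: (i - j) => [|n IH] //.
  have := xS (n + j); rewrite addSn; lia.
have xk : forall k, k <= x k by elim=> [|k IH]; [lia | have := xS k; lia].
pose A := [set y | exists k, y = x k].
have AD : A `<=` D by move=> y [k ->].
have Ainf : infinite_set A.
  by apply: unb_inf => N; exists (x N); split; [exists N | exact: xk].
exists A; split => //.
- apply: thin_notIP => b b0; exists (x b).+1 => c [j ->] [i ei].
  rewrite ltnS; apply: contraT; rewrite -ltnNge => lt.
  have jb : b < j by apply: contraT; rewrite -leqNgt => /xm; lia.
  have ij : j < i by apply: contraT; rewrite -leqNgt => /xm; lia.
  have := xm _ _ ij; have := xS j; lia.
- move=> A' /HG; apply: sub_finite_set => y [Ay A'y]; split=> //; exact: AD.
- by rewrite (_ : D `&` A = A) //; apply/seteqP; split => y //; [case | move=> Ay; split=> //; exact: AD].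
Qed.

Lemma fto_bound B f : finite_to_one_on B f ->
  forall K, exists N, forall x, B x -> f x <= K -> x < N.
Proof.
move=> H; elim=> [|K [N HN]].
  have [N HN] := fin_bound (H 0); exists N => x Bx; rewrite leqn0 => /eqP e.
  by apply: HN; split.
have [N' HN'] := fin_bound (H K.+1); exists (maxn N N') => x Bx.
rewrite leq_eqVlt => /orP[/eqP e|lt].
  have := HN' x (conj Bx e); lia.
have := HN x Bx; rewrite -ltnS => /(_ lt); lia.
Qed.

Lemma AP_set_sub (X Y : set nat) : X `<=` Y -> AP_set X -> AP_set Y.
Proof.
move=> sXY H k; have [a [d [d0 h]]] := H k; exists a, d; split=> // i /h; exact: sXY.
Qed.

Lemma stepAP B f (g : nat -> set nat) : AP_set B -> finite_to_one_on B f ->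
  (forall j, ~ AP_set (B `&` f @^-1` (g j))) ->
  forall k M, exists a d r, 0 < d /\ forall i, i < k ->
    [/\ B (a + i * d), (forall j, j <= k -> ~ g j (f (a + i * d))),
        k + M < f (a + i * d) & f (a + i * d) %% k.+1 = r].
Proof.
move=> HB Hf Hg k M.
pose Q i := if i < k.+1 then
     [set x | (forall j, j <= k -> ~ g j (f x)) /\ k + M < f x /\ f x %% k.+1 = i]
   else if i < (k.+1).*2 then [set x | g (i - k.+1) (f x)]
   else [set x | f x <= k + M].
have cov : forall x, B x -> exists2 i, i < (k.+1).*2.+1 & Q i x.
  move=> x Bx; case: (leqP (f x) (k + M)) => hle.
    exists (k.+1).*2 => //; rewrite /Q ifF; last by lia.
    rewrite ifF; last by lia.
    exact: hle.
  case: (pselect (exists2 j, j <= k & g j (f x))) => [[j jk gj]|nj].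
    exists (k.+1 + j); first by lia.
    rewrite /Q ifF; last by lia.
    rewrite ifT; last by lia.
    by rewrite /= addKn.
  exists (f x %% k.+1); first by have := ltn_pmod (f x) (ltn0Sn k); lia.
  rewrite /Q ifT; last exact: ltn_pmod.
  split; last by split.
  by move=> j jk gj; apply: nj; exists j.
have [i ilt HQ] := PR HB cov.
case: (ltnP i k.+1) => ik.
  have [a [d [d0 h]]] := HQ k; exists a, d, i; split=> // i' i'k.
  have [Ba] := h i' i'k; rewrite /Q ik => -[h1 [h2 h3]]; by split.
case: (ltnP i (k.+1).*2) => ik2.
  exfalso; apply: (Hg (i - k.+1)); apply: (AP_set_sub _ HQ) => x [Bx].
  by rewrite /Q ifF ?ik2 //; lia.
exfalso; have [N HN] := fto_bound Hf (k + M).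
have [a [d [d0 h]]] := HQ N.+1.
have [Bx] := h N (ltnSn _); rewrite /Q ifF; last by lia.
rewrite ifF; last by lia.
move=> /= le; have := HN _ Bx le; have : N <= N * d by rewrite leq_pmulr.
lia.
Qed.

Fixpoint Mseq (pa pd : nat -> nat -> nat) (f : nat -> nat) k :=
  match k with
  | 0 => 0
  | k'.+1 => maxn (Mseq pa pd f k')
      (\max_(i < k') f (pa k' (Mseq pa pd f k') + i * pd k' (Mseq pa pd f k')))
  end.

Lemma E2 (G : set (set nat)) B f (g : nat -> set nat) :
  AP_set B -> finite_to_one_on B f ->
  (forall A', G A' -> exists j, g j = A') ->
  (forall j, ~ AP_set (B `&` f @^-1` (g j))) ->
  exists A, [/\ infinite_set A, ~ IP_set A,
    (forall A', G A' -> finite_set (A `&` A')) &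
    exists C, [/\ C `<=` B, AP_set C & f @` C `<=` A]].
Proof.
move=> HB Hf HG Hg.
have HS := stepAP HB Hf Hg.
have HS' : forall p : nat * nat, exists q : nat * nat * nat,
    0 < q.1.2 /\ forall i, i < p.1 ->
    [/\ B (q.1.1 + i * q.1.2), (forall j, j <= p.1 -> ~ g j (f (q.1.1 + i * q.1.2))),
        p.1 + p.2 < f (q.1.1 + i * q.1.2) & f (q.1.1 + i * q.1.2) %% p.1.+1 = q.2].
  by move=> [k M]; have [a [d [r h]]] := HS k M; exists (a, d, r).
have [pk Hpk] := choice HS'.
pose pa k M := (pk (k, M)).1.1.
pose pd k M := (pk (k, M)).1.2.
pose M := Mseq pa pd f.
pose a k := pa k (M k).
pose d k := pd k (M k).
pose r k := (pk (k, M k)).2.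
have spec : forall k, 0 < d k /\ forall i, i < k ->
    [/\ B (a k + i * d k), (forall j, j <= k -> ~ g j (f (a k + i * d k))),
        k + M k < f (a k + i * d k) & f (a k + i * d k) %% k.+1 = r k].
  by move=> k; exact: (Hpk (k, M k)).
have M2 : forall k i, i < k -> f (a k + i * d k) <= M k.+1.
  move=> k i ik; rewrite /M /= -/M; apply: leq_trans (leq_maxr _ _).
  exact: (leq_bigmax (F := fun i : 'I_k => f (a k + i * d k)) (Ordinal ik)).
have M1 : forall k, M k <= M k.+1 by move=> k; rewrite /M /=; exact: leq_maxl.
have Mm : forall j i, j <= i -> M j <= M i.
  move=> j i /subnK <-; elim: (i - j) => [|n IH] //.
  have := M1 (n + j); rewrite addSn; lia.
pose C := [set x | exists k i, i < k /\ x = a k + i * d k].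
exists (f @` C); split.
- apply: unb_inf => N; exists (f (a N.+1 + 0 * d N.+1)); split.
    by exists (a N.+1 + 0 * d N.+1) => //; exists N.+1, 0.
  have [_ h] := spec N.+1; have [_ _ h3 _] := h 0 isT; lia.
- apply: thin_notIP => b b0; exists (M b).+1.
  move=> c [x [j [i [ij ->]]] <-] [y [l [i' [il ->]]] ey].
  rewrite ltnS; apply: contraT; rewrite -ltnNge => lt.
  have jb : b <= j.
    apply: contraT; rewrite -ltnNge => jb.
    have := M2 _ _ ij; have := Mm j.+1 b jb; lia.
  have [_ hj] := spec j; have [_ _ hj3 hj4] := hj i ij.
  have [_ hl] := spec l; have [_ _ hl3 hl4] := hl i' il.
  case: (ltngtP l j) => hlj.
  + have := M2 _ _ il; have := Mm _ _ hlj; lia.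
  + have := Mm _ _ hlj; have := M2 _ _ ij; lia.
  + subst l.
    have : (f (a j + i * d j) + b == f (a j + i * d j) + 0 %[mod j.+1]).
      by rewrite addn0 -ey; apply/eqP; rewrite hl4 hj4.
    rewrite eqn_modDl mod0n modn_small; last by lia.
    by move=> /eqP; lia.
- move=> A' /HG [j <-]; apply: (@bound_fin _ (M j).+1).
  move=> y [[x [k [i [ik ->]]] <-] gy].
  have [_ hk] := spec k; have [_ hk2 _ _] := hk i ik.
  case: (leqP j k) => jk; first by exfalso; exact: (hk2 j jk gy).
  have := M2 _ _ ik; have := Mm _ _ jk; lia.
- exists C; split => //.
  + by move=> x [k [i [ik ->]]]; have [_ hk] := spec k; have [] := hk i ik.
  + move=> k; exists (a k), (d k); have [d0 _] := spec k; split=> // i ik.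
    by exists k, i.
Qed.

Definition code (t n m : nat) : nat := pickle (t, n, m).

Lemma code_inj t n m t' n' m' : code t n m = code t' n' m' -> [/\ t = t', n = n' & m = m'].
Proof. by move=> /(pcan_inj (@pickleK _)) [-> -> ->]. Qed.

Definition flag (X : set nat) : Prop := X (code 0 0 0).
Definition Dof (X : set nat) := [set n | X (code 1 n 0)].
Definition Bof (X : set nat) := [set n | X (code 2 n 0)].
Definition fof (X : set nat) : nat -> nat := fun n =>
  match pselect (exists m, X (code 3 n m)) with
  | left h => proj1_sig (cid h) | right _ => 0 end.

Definition Good (G : set (set nat)) (A : set nat) :=
  [/\ infinite_set A, ~ IP_set A & forall A', G A' -> finite_set (A `&` A')].
Definition Task (X : set nat) (A : set nat) :=
  (flag X -> infinite_set (Dof X `&` A)) /\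
  (~ flag X -> exists C, [/\ C `<=` Bof X, AP_set C & fof X @` C `<=` A]).
Definition R (X : set nat) G A := Good G A /\ Task X A.

Definition step (X : set nat) (G : set (set nat)) : option (set nat) :=
  match pselect (exists A, R X G A) with
  | left h => Some (proj1_sig (cid h)) | right _ => None end.

Lemma step_some X G A : step X G = Some A -> R X G A.
Proof.
rewrite /step; case: pselect => [h|//] [<-]; exact: (proj2_sig (cid h)).
Qed.

Lemma step_ex X G : (exists A, R X G A) -> exists A, step X G = Some A.
Proof. by rewrite /step; case: pselect => [h _|h /h//]; eexists. Qed.

Lemma enum_countable (G : set (set nat)) : countable G ->
  exists g : nat -> set nat, (forall A, G A -> exists j, g j = A) /\
    (forall j, G (g j) \/ g j = set0).
Proof.
move=> /countable_injP [h hinj].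
exists (fun j => match pselect (exists A, G A /\ h A = j) with
  | left e => proj1_sig (cid e) | right _ => set0 end); split.
  move=> A GA; exists (h A); case: pselect => [e|ne]; last by exfalso; apply: ne; exists A.
  case: (cid e) => A0 [GA0 e0] /=; apply: hinj => //; by rewrite inE.
move=> j; case: pselect => [e|ne]; last by right.
by left; case: (cid e) => A0 [].
Qed.

Lemma AP_nonempty X : AP_set X -> exists x, X x.
Proof. by move=> /(_ 1) [a [d [_ h]]]; exists (a + 0 * d); exact: h. Qed.

Theorem lemma2p1 : CH ->
  exists F : set (set nat),
    MAD F /\ (forall A, F A -> ~ IP_set A) /\
    (forall (B : set nat) (f : nat -> nat), AP_set B -> finite_to_one_on B f ->
       exists C A : set nat, [/\ C `<=` B, AP_set C, F A & f @` C `<=` A]).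
Proof.
move=> [lt [Hwf [Htr [Htri Hcnt]]]].
pose Fstep := fun X (rec : forall Y, lt Y X -> option (set nat)) =>
  step X [set A | exists Y (h : lt Y X), rec Y h = Some A].
pose Arec := Fix Hwf (fun _ => option (set nat)) Fstep.
pose Gof X := [set A | exists Y (h : lt Y X), Arec Y = Some A].
have Arec_eq : forall X, Arec X = step X (Gof X).
  move=> X; rewrite /Arec Fix_eq //.
  move=> Z f1 f2 H; rewrite /Fstep; congr step.
  by apply/seteqP; split => A [Y [h e]]; exists Y, h; rewrite ?H // -H.
pose F := [set A | exists X, Arec X = Some A].
have GF : forall X, Gof X `<=` F by move=> X A [Y [_ e]]; exists Y.
have Gcnt : forall X, countable (Gof X).
  move=> X; apply: (sub_countable _ (Hcnt X)).
  apply: card_le_trans (card_image_le (fun Y => odflt set0 (Arec Y)) _).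
  apply: subset_card_le => A [Y [h e]]; exists Y => //=; by rewrite e.
have FR : forall A, F A -> exists X, R X (Gof X) A.
  by move=> A [X e]; exists X; apply: step_some; rewrite -Arec_eq.
exists F; split; [split; [split|] | split].
- by move=> A /FR [X [[]]].
- move=> A A' [X eX] [Y eY] neq.
  case: (Htri X Y) => [lXY|[eXY|lYX]].
  + have [[_ _ h] _] := step_some (etrans (esym (Arec_eq Y)) eY).
    by rewrite setIC; apply: h; exists X, lXY.
  + by subst Y; move: eY; rewrite eX => -[].
  + have [[_ _ h] _] := step_some (etrans (esym (Arec_eq X)) eX).
    by apply: h; exists Y, lYX.
- move=> D Dinf.
  pose X := [set x | x = code 0 0 0 \/ exists n, D n /\ x = code 1 n 0].
  have fX : flag X by left.
  have DX : Dof X = D.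
    apply/seteqP; split => n /=.
      by case=> [/code_inj [] //|[n' [Dn' /code_inj [_ -> _]]]].
    by move=> Dn; right; exists n.
  case: (pselect (exists2 A', Gof X A' & infinite_set (D `&` A'))) => [[A' GA' iA']|nA].
    by exists A' => //; exact: GF GA'.
  have HG : forall A', Gof X A' -> finite_set (D `&` A').
    by move=> A' GA'; apply: contrapT => h; apply: nA; exists A'.
  have [A [Ai AnIP AAD DA]] := E1 Dinf HG.
  have RA : R X (Gof X) A.
    split; first by split.
    by split => h; [rewrite DX | exfalso; exact: h fX].
  have [A0 e0] := step_ex (ex_intro _ A RA).
  have [_ [T1 _]] := step_some e0.
  by exists A0; [exists X; rewrite Arec_eq | rewrite -DX; exact: T1].
- by move=> A /FR [X [[]]].
move=> B f HB Hf.
pose X := [set x | (exists n, B n /\ x = code 2 n 0) \/ exists n, x = code 3 n (f n)].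
have nfX : ~ flag X by case=> [[n [_ /code_inj [] //]]|[n /code_inj []//]].
have BX : Bof X = B.
  apply/seteqP; split => n /=.
    by case=> [[n' [Bn' /code_inj [_ -> _]]]|[n' /code_inj []//]].
  by move=> Bn; left; exists n.
have fX : fof X = f.
  apply: funext => n; rewrite /fof; case: pselect => [h|h]; last first.
    by exfalso; apply: h; exists (f n); right; exists n.
  case: (cid h) => m /= [[n' [_ /code_inj []//]]|[n' /code_inj [_ -> ->]]] //.
case: (pselect (exists C A', [/\ C `<=` B, AP_set C, Gof X A' & f @` C `<=` A'])) =>
  [[C [A' [h1 h2 h3 h4]]]|nCA].
  by exists C, A'; split=> //; exact: GF h3.
have [g [Hg1 Hg2]] := enum_countable (Gcnt X).
have Hg : forall j, ~ AP_set (B `&` f @^-1` (g j)).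
  move=> j hAP; case: (Hg2 j) => [Gj|g0].
    apply: nCA; exists (B `&` f @^-1` (g j)), (g j).
    split; [by move=> x [] | by [] | by [] | by move=> y [x [_ fx] <-]].
  have [x [_]] := AP_nonempty hAP; by rewrite g0.
have [A [Ai AnIP AAD HC]] := E2 HB Hf Hg1 Hg.
have RA : R X (Gof X) A.
  split; first by split.
  by split => h; [exfalso; exact: nfX h | rewrite BX fX].
have [A0 e0] := step_ex (ex_intro _ A RA).
have [_ [_ T2]] := step_some e0.
have [C [h1 h2 h3]] := T2 nfX.
exists C, A0; split => //.
- by rewrite -BX.
- by exists X; rewrite Arec_eq.
- by rewrite -fX.
Qed.
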